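(* Let $G$ be a compact connected Lie group with Lie algebra $\mathfrak g$, let $\langle\cdot,\cdot\rangle$ be an $\mathrm{Ad}_G$-invariant scalar product on $\mathfrak g$ (used to identify $\mathfrak g^*\cong\mathfrak g$), let $\mathbb I:\mathfrak g\to\mathfrak g$ be a symmetric positive definite operator, let $k\ge 1$, and let $\epsilon\neq 0$ be a real parameter. On the open subset of $\mathfrak g^{k+1}(m,e_1,\dots,e_k)$ where $e_1,\dots,e_k$ are linearly independent, consider the system $$\dot m=[m,\omega]+\sum_{i=1}^k\lambda^i e_i,\qquad m=\mathbb I\omega,\qquad \dot e_i=\epsilon[e_i,\omega],\quad i=1,\dots,k,$$ where $\lambda^i=-\sum_{j=1}^k\langle e_j,\mathbb I^{-1}[m,\omega]\rangle\,\mathbb A^{ij}$, with $(\mathbb A^{ij})$ the inverse of the matrix $\mathbb A_{ij}=\langle e_i,\mathbb I^{-1}e_j\rangle$, $i,j=1,\dots,k$. Then this system has the invariant measure $$\mu_\epsilon\,\mathrm dm\wedge\mathrm de_1\wedge\cdots\wedge\mathrm de_k,\qquad\text{equivalently}\qquad \mu_\epsilon\,\mathrm d\omega\wedge\mathrm de_1\wedge\cdots\wedge\mathrm de_k,$$ with density $\mu_\epsilon=\Delta^{\frac{1}{2\epsilon}}$, where $\Delta=\det(\langle\mathbb I^{-1}e_i,e_j\rangle)_{i,j=1}^k$.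
   Context: $\mathrm dm,\mathrm d\omega,\mathrm de_i$ denote the standard (Lebesgue) volume forms on $\mathfrak g$ with respect to the metric $\langle\cdot,\cdot\rangle$. The multipliers $\lambda^i$ are exactly those for which the functions $\langle\omega,e_i\rangle$ are conserved along trajectories. This system is called the $\epsilon$LR system. *)

(* Defs.v *)
From HB Require Import structures.
From mathcomp Require Import all_boot all_order all_algebra.
From mathcomp Require Import all_classical all_reals all_analysis.
Set Implicit Arguments. Unset Strict Implicit. Unset Printing Implicit Defensive.
Import Order.TTheory GRing.Theory Num.Theory.
Import numFieldNormedType.Exports.
Local Open Scope ring_scope.

(* The Lie algebra g is identified (via a basis) with row vectors 'rV[R]_n.
   The bracket is given by structure constants c i j l : [x,y]_l = sum x_i y_j c_ij^l. *)
Definition lie_br {R : realType} {n : nat} (c : 'I_n -> 'I_n -> 'I_n -> R)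
  (x y : 'rV[R]_n) : 'rV[R]_n :=
  \row_l \sum_i \sum_j x 0 i * y 0 j * c i j l.

Definition ip {R : realType} {n : nat} (B : 'M[R]_n) (x y : 'rV[R]_n) : R :=
  (x *m B *m y^T) 0 0.

(* The phase point (m, e_1, ..., e_k) is a (k+1) x n matrix: row 0 is m,
   row (lift ord0 i) is e_(i+1). *)
Definition mpart {R : realType} {n k : nat} (X : 'M[R]_(k.+1, n)) : 'rV[R]_n :=
  row ord0 X.
Definition epart {R : realType} {n k : nat} (X : 'M[R]_(k.+1, n)) (i : 'I_k)
  : 'rV[R]_n := row (lift ord0 i) X.

(* The operator II acts on row vectors by x |-> x *m II. *)
Definition eLR_field {R : realType} {n k : nat} (c : 'I_n -> 'I_n -> 'I_n -> R)
  (B II : 'M[R]_n) (eps : R) (X : 'M[R]_(k.+1, n)) : 'M[R]_(k.+1, n) :=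
  let m := mpart X in
  let e := epart X in
  let Iinv := invmx II in
  let w := m *m Iinv in
  let bmw := lie_br c m w in
  let A := \matrix_(i < k, j < k) ip B (e i) (e j *m Iinv) in
  let Ainv := invmx A in
  let lam (i : 'I_k) := - \sum_(j < k) ip B (e j) (bmw *m Iinv) * Ainv i j in
  let mdot := bmw + \sum_(i < k) lam i *: e i in
  \matrix_(p, q) (match unlift ord0 p with
                  | Some i => (eps *: lie_br c (e i) w) 0 q
                  | None => mdot 0 q
                  end).

Definition eLR_Delta {R : realType} {n k : nat} (B II : 'M[R]_n)
  (X : 'M[R]_(k.+1, n)) : R :=
  \det (\matrix_(i < k, j < k) ip B (epart X i *m invmx II) (epart X j)).

Definition eLR_domain {R : realType} {n k : nat} (X : 'M[R]_(k.+1, n)) : bool :=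
  row_free (\matrix_(i < k, j < n) X (lift ord0 i) j).

(* Divergence with respect to the (constant multiple of) Lebesgue volume
   on the coordinates of the phase space. *)
Definition divergence {R : realType} {p q : nat}
  (F : 'M[R]_(p, q) -> 'M[R]_(p, q)) (X : 'M[R]_(p, q)) : R :=
  \sum_(a < p) \sum_(b < q) 'D_(delta_mx a b) (fun Y => F Y a b) X.

(* mu dX is an invariant measure of the vector field F on the open set U:
   mu F is differentiable on U and satisfies the Liouville equation
   div (mu F) = 0 there. *)
Definition invariant_density {R : realType} {p q : nat}
  (U : set 'M[R]_(p, q)) (mu : 'M[R]_(p, q) -> R)
  (F : 'M[R]_(p, q) -> 'M[R]_(p, q)) : Prop :=
  forall X, U X ->
    differentiable (fun Y => mu Y *: F Y) X /\
    divergence (fun Y => mu Y *: F Y) X = 0.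

(* Main.v *)
Require Import Defs.
From HB Require Import structures.
From mathcomp Require Import all_boot all_order all_algebra.
From mathcomp Require Import all_classical all_reals all_analysis.
From mathcomp Require Import perm ring lra.
Import Order.TTheory GRing.Theory Num.Theory.
Import numFieldNormedType.Exports.
Local Open Scope ring_scope.

Set Implicit Arguments. Unset Strict Implicit. Unset Printing Implicit Defensive.

Section GenDiff.
Context {R : realType} {V : normedModType R}.
Variable x : V.

Lemma is_diff_near0 (e : V -> R) :
  (\forall y \near x, e y = 0) -> is_diff x e (fun _ => 0).
Proof.
move=> e0.
have ex0 : e x = 0 by apply: (nbhs_singleton e0).
have H : e \o shift x = cst (e x) + \0 +o_ 0 id.
  apply/eqaddoP => eps eps0.
  rewrite ex0.
  have : \forall h \near (0:V), e (h + x) = 0.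
    by rewrite (near_shift x); apply: filterS e0 => z; rewrite /= sub0r subrK.
  apply: filterS => h /= eh.
  have -> : (e \o shift x - (cst 0 + \0)) h = 0.
    by rewrite !fctE /= eh addr0 subr0.
  by rewrite normr0 mulr_ge0 // ltW.
have dd : 'd e x = \0 :> (V -> R).
  by apply: diff_unique => //; exact: cst_continuous.
apply: DiffDef => //.
by apply/diff_locallyP; rewrite dd; split => //; exact: cst_continuous.
Unshelve. all: by end_near. Qed.


Lemma isd_ext (f g df dg : V -> R) : (forall y, f y = g y) -> (forall v, df v = dg v) ->
  is_diff x f df -> is_diff x g dg.
Proof.
by move=> /funext <- /funext <-.
Qed.

Lemma isd_near (f g df : V -> R) :
  is_diff x f df -> (\forall y \near x, f y = g y) -> is_diff x g df.
Proof.
move=> H fg.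
have H0 : is_diff x (fun y => g y - f y) (fun _ => 0).
  apply: is_diff_near0; apply: filterS fg => y ->; exact: subrr.
have := is_diffD H H0.
apply: isd_ext => [y|v]; rewrite !fctE ?addr0 //.
by rewrite addrC subrK.
Qed.

Lemma isd_uniq (f df dg : V -> R) : is_diff x f df -> is_diff x f dg -> df = dg.
Proof.
by move=> H1 H2; rewrite -(@diff_val _ _ _ _ _ _ _ H1) -(@diff_val _ _ _ _ _ _ _ H2).
Qed.

Lemma isd_cst (a : R) : is_diff x (fun _ => a) (fun _ => 0).
Proof. exact: is_diff_cst. Qed.

Lemma isd_add (f g df dg : V -> R) : is_diff x f df -> is_diff x g dg ->
  is_diff x (fun y => f y + g y) (fun v => df v + dg v).
Proof. by move=> H1 H2; have := is_diffD H1 H2. Qed.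

Lemma isd_opp (f df : V -> R) : is_diff x f df ->
  is_diff x (fun y => - f y) (fun v => - df v).
Proof. by move=> H1; have := is_diffN H1. Qed.

Lemma isd_mul (f g df dg : V -> R) : is_diff x f df -> is_diff x g dg ->
  is_diff x (fun y => f y * g y) (fun v => f x * dg v + g x * df v).
Proof. by move=> H1 H2; have := is_diffM H1 H2. Qed.

Lemma isd_inv (f df : V -> R) : is_diff x f df -> f x != 0 ->
  is_diff x (fun y => (f y)^-1) (fun v => - (f x) ^- 2 * df v).
Proof.
move=> H1 fx0; apply: DiffDef.
  by apply: differentiableV.
rewrite diffV //; rewrite (@diff_val _ _ _ _ _ _ _ H1).
by apply/funext => v.
Qed.

Lemma isd_sum (I : Type) (r : seq I) (P : pred I) (f df : I -> V -> R) :
  (forall i, P i -> is_diff x (f i) (df i)) ->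
  is_diff x (fun y => \sum_(i <- r | P i) f i y) (fun v => \sum_(i <- r | P i) df i v).
Proof.
move=> H; elim: r => [|a r IH].
  apply: isd_ext (isd_cst 0) => [y|v]; by rewrite big_nil.
case Pa: (P a).
  apply: isd_ext (isd_add (H a Pa) IH) => [y|v]; by rewrite big_cons Pa.
apply: isd_ext IH => [y|v]; by rewrite big_cons Pa.
Qed.


Lemma isd_prod m (f df : 'I_m -> V -> R) : (forall i, is_diff x (f i) (df i)) ->
  is_diff x (fun y => \prod_(i < m) f i y)
    (fun v => \sum_(i < m) \prod_(j < m) (if j == i then df j v else f j x)).
Proof.
elim: m f df => [|m IH] f df H.
  apply: isd_ext (isd_cst 1) => [y|v]; by rewrite ?big_ord0.
have H1 := IH (fun i => f (widen_ord (leqnSn m) i)) (fun i => df (widen_ord (leqnSn m) i))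
  (fun i => H _).
have H2 := isd_mul H1 (H ord_max).
apply: isd_ext H2 => [y|v]; first by rewrite big_ord_recr.
have eqw (i j : 'I_m) : (widen_ord (leqnSn m) j == widen_ord (leqnSn m) i) = (j == i).
  by apply/eqP/eqP => [/(congr1 val) /= /val_inj|->].
have eqm (j : 'I_m) : (widen_ord (leqnSn m) j == ord_max) = false.
  apply/eqP => /(congr1 val) /= jm; by move: (ltn_ord j); rewrite jm ltnn.
rewrite [RHS]big_ord_recr /= addrC; congr (_ + _).
  rewrite big_ord_recr /=; rewrite eqxx; congr (_ * _).
  by apply: eq_bigr => j _; rewrite eqm.
rewrite mulrC big_distrl /=; apply: eq_bigr => i _.
rewrite big_ord_recr /= eq_sym eqm; congr (_ * _).
Qed.


Lemma isd_powR (s ds : V -> R) (r : R) : is_diff x s ds -> 0 < s x ->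
  is_diff x (fun y => s y `^ r) (fun v => r * s x `^ (r - 1) * ds v).
Proof.
move=> H sx0.
have sxi : s x \in `]0, +oo[%R by rewrite in_itv /= andbT.
have dd : differentiable (fun a : R => a `^ r) (s x).
  by apply/derivable1_diffP; apply: derivable_powR.
have dR : is_diff (s x) (fun a : R => a `^ r) (fun h => h * (r * s x `^ (r - 1))).
  apply: DiffDef => //; rewrite diff1E //; apply/funext => h.
  by rewrite (powR_derive1 r sxi).
have := is_diff_comp H dR.
apply: isd_ext => [y|v] //=.
by rewrite mulrC.
Qed.

End GenDiff.

Section MatDiff.
Context {R : realType} {p q : nat}.
Local Notation V := 'M[R]_(p, q).
Variable x : V.

Definition MD a b (f df : V -> 'M[R]_(a, b)) :=
  forall i j, is_diff x (fun y => f y i j) (fun v => df v i j).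

Lemma isd_coord i j : is_diff x (fun N : V => N i j) (fun v => v i j).
Proof.
have @f : {linear V -> R}.
  by exists (fun N : V => N i j); do 2![eexists]; do ?[constructor];
     rewrite ?mxE// => ? *; rewrite ?mxE//; move=> ?; rewrite !mxE.
rewrite (_ : (fun _ => _) = f) //; apply: DiffDef.
  exact: differentiable_coord.
by rewrite diff_lin //; exact: coord_continuous.
Qed.

Lemma MD_id : MD id id.
Proof. move=> i j; exact: isd_coord. Qed.

Lemma MD_ext a b (f g df dg : V -> 'M[R]_(a, b)) :
  (forall y, f y = g y) -> (forall v, df v = dg v) -> MD f df -> MD g dg.
Proof. by move=> /funext <- /funext <-. Qed.

Lemma MD_cst a b (C : 'M[R]_(a, b)) : MD (fun _ => C) (fun _ => 0).
Proof. move=> i j; apply: isd_ext (isd_cst x (C i j)) => // v; by rewrite mxE. Qed.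

Lemma MD_add a b (f g df dg : V -> 'M[R]_(a, b)) : MD f df -> MD g dg ->
  MD (fun y => f y + g y) (fun v => df v + dg v).
Proof.
move=> H1 H2 i j; apply: isd_ext (isd_add (H1 i j) (H2 i j)) => [y|v]; by rewrite mxE.
Qed.

Lemma MD_opp a b (f df : V -> 'M[R]_(a, b)) : MD f df ->
  MD (fun y => - f y) (fun v => - df v).
Proof.
move=> H1 i j; apply: isd_ext (isd_opp (H1 i j)) => [y|v]; by rewrite mxE.
Qed.

Lemma MD_scale a b (s ds : V -> R) (f df : V -> 'M[R]_(a, b)) :
  is_diff x s ds -> MD f df ->
  MD (fun y => s y *: f y) (fun v => s x *: df v + ds v *: f x).
Proof.
move=> H1 H2 i j; apply: isd_ext (isd_mul H1 (H2 i j)) => [y|v]; rewrite !mxE //.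
by rewrite [f x i j * _]mulrC.
Qed.

Lemma MD_sum a b (I : Type) (r : seq I) (P : pred I) (f df : I -> V -> 'M[R]_(a, b)) :
  (forall i, P i -> MD (f i) (df i)) ->
  MD (fun y => \sum_(i <- r | P i) f i y) (fun v => \sum_(i <- r | P i) df i v).
Proof.
move=> H i j.
apply: isd_ext (isd_sum r (f := fun l y => f l y i j) (df := fun l v => df l v i j)
   (fun l Pl => H l Pl i j)) => [y|v]; by rewrite summxE.
Qed.

Lemma MD_mul a b c (f df : V -> 'M[R]_(a, b)) (g dg : V -> 'M[R]_(b, c)) :
  MD f df -> MD g dg ->
  MD (fun y => f y *m g y) (fun v => df v *m g x + f x *m dg v).
Proof.
move=> H1 H2 i j.
have := isd_sum (index_enum 'I_b) (P := xpredT)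
   (f := fun l y => f y i l * g y l j)
   (df := fun l v => f x i l * dg v l j + g x l j * df v i l)
   (fun l _ => isd_mul (H1 i l) (H2 l j)).
apply: isd_ext => [y|v]; rewrite !mxE //.
rewrite big_split /= addrC; congr (_ + _); apply: eq_bigr => l _;
  by rewrite mulrC.
Qed.

Lemma MD_tr a b (f df : V -> 'M[R]_(a, b)) : MD f df ->
  MD (fun y => (f y)^T) (fun v => (df v)^T).
Proof. move=> H i j; apply: isd_ext (H j i) => [y|v]; by rewrite mxE. Qed.

Lemma MD_row a b (f df : V -> 'M[R]_(a, b)) k : MD f df ->
  MD (fun y => row k (f y)) (fun v => row k (df v)).
Proof. move=> H i j; apply: isd_ext (H k j) => [y|v]; by rewrite mxE. Qed.

Lemma MD_entry a b (f df : V -> 'M[R]_(a, b)) i j : MD f df ->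
  is_diff x (fun y => f y i j) (fun v => df v i j).
Proof. by move=> H; apply: H. Qed.


Lemma isd_det n (f df : V -> 'M[R]_n) : MD f df ->
  is_diff x (fun y => \det (f y))
    (fun v => \sum_i \sum_j df v i j * cofactor (f x) i j).
Proof.
move=> H.
have Hs := isd_sum (index_enum 'S_n) (P := xpredT)
  (f := fun (s : 'S_n) y => (-1) ^+ s * \prod_i f y i (s i))
  (df := fun (s : 'S_n) v => (-1) ^+ s * (\sum_i \prod_j (if j == i then df v j (s j) else f x j (s j)))
        + (\prod_i f x i (s i)) * 0)
  (fun s _ => isd_mul (isd_cst x _) (isd_prod (f := fun i y => f y i (s i))
      (df := fun i v => df v i (s i)) (fun i => H i (s i)))).
apply: isd_ext Hs => [y|v]; first by [].
under eq_bigr do rewrite mulr0 addr0 big_distrr.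
rewrite exchange_big /=; apply: eq_bigr => i _.
pose N := \matrix_(j, l) (if j == i then df v j l else f x j l).
transitivity (\det N).
  rewrite /determinant; apply: eq_bigr => s _; congr (_ * _).
  by apply: eq_bigr => j _; rewrite mxE.
rewrite (expand_det_row N i); apply: eq_bigr => l _; rewrite mxE eqxx; congr (_ * _).
rewrite /cofactor; congr (_ * _); congr (\det _); apply/matrixP => a b.
by rewrite !mxE eq_sym (negbTE (neq_lift i a)).
Qed.


Lemma MD_sub n (f df : V -> 'M[R]_n.+1) (i j : 'I_n.+1) : MD f df ->
  MD (fun y => row' i (col' j (f y))) (fun v => row' i (col' j (df v))).
Proof. move=> H a b; apply: isd_ext (H _ _) => [y|v]; by rewrite !mxE. Qed.

Lemma MD_inv_ex n (f df : V -> 'M[R]_n) : MD f df -> f x \in unitmx ->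
  exists D, MD (fun y => invmx (f y)) D.
Proof.
case: n f df => [|n] f df H fu.
  exists (fun _ => 0) => i; by case: i.
have Hd := isd_det H.
have dn : \forall y \near x, \det (f y) != 0.
  have dd : differentiable (fun y => \det (f y)) x by exact: ex_diff.
  have dc := differentiable_continuous dd.
  have fx0 : \det (f x) != 0 by rewrite -unitfE -unitmxE.
  exact: (@cvgr_neq0 R R _ (nbhs x) _ (fun y => \det (f y)) _ dc fx0).
have dx0 : \det (f x) != 0 by rewrite -unitfE -unitmxE.
exists (fun v => \matrix_(i, j) (- (\det (f x)) ^- 2
     * (\sum_a \sum_b df v a b * cofactor (f x) a b) * cofactor (f x) j i
   + (\det (f x))^-1 * ((-1) ^+ (j + i) *
     \sum_a \sum_b row' j (col' i (df v)) a b * cofactor (row' j (col' i (f x))) a b))).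
move=> i j.
have H1 := isd_mul (isd_inv Hd dx0)
  (isd_mul (isd_cst x ((-1) ^+ (j + i) : R)) (isd_det (MD_sub j i H))).
apply: isd_near.
  apply: isd_ext H1 => // v.
  by rewrite mxE /cofactor; ring.
apply: filterS dn => y dy.
by rewrite /invmx unitmxE unitfE dy /= !mxE /cofactor.
Qed.

Lemma MD_inv n (f df : V -> 'M[R]_n) : MD f df -> f x \in unitmx ->
  MD (fun y => invmx (f y)) (fun v => - (invmx (f x) *m df v *m invmx (f x))).
Proof.
move=> H fu; have [D HD] := MD_inv_ex H fu.
have HM := MD_mul H HD.
have dn : \forall y \near x, \det (f y) != 0.
  have Hd := isd_det H.
  have dd : differentiable (fun y => \det (f y)) x by exact: ex_diff.
  have dc := differentiable_continuous dd.
  have fx0 : \det (f x) != 0 by rewrite -unitfE -unitmxE.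
  exact: (@cvgr_neq0 R R _ (nbhs x) _ (fun y => \det (f y)) _ dc fx0).
have E : forall v, df v *m invmx (f x) + f x *m D v = 0.
  move=> v; apply/matrixP => i j; rewrite [RHS]mxE.
  have H0 : is_diff x (fun y => (f y *m invmx (f y)) i j) (fun _ => 0).
    apply: isd_near (isd_cst x ((1%:M : 'M[R]_n) i j)) _.
    apply: filterS dn => y dy; rewrite mulmxV //.
    by rewrite unitmxE unitfE.
  by have := isd_uniq (HM i j) H0 => /(congr1 (fun F => F v)) ->.
apply: MD_ext HD => // v.
have := congr1 (mulmx (invmx (f x))) (E v).
rewrite mulmxDr [invmx _ *m (f x *m _)]mulmxA mulVmx // mul1mx mulmx0 mulmxA => /eqP.
by rewrite addrC addr_eq0 => /eqP.
Qed.

End MatDiff.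

Section Alg.
Variables (R : realType) (n : nat) (c : 'I_n -> 'I_n -> 'I_n -> R) (B II : 'M[R]_n).
Hypothesis Hanti : forall x y : 'rV[R]_n, lie_br c y x = - lie_br c x y.
Hypothesis HBsym : B^T = B.
Hypothesis HBpos : forall x : 'rV[R]_n, x != 0 -> 0 < ip B x x.
Hypothesis HBinv : forall x y z : 'rV[R]_n, ip B (lie_br c x y) z = ip B x (lie_br c y z).
Hypothesis HIsym : forall x y : 'rV[R]_n, ip B (x *m II) y = ip B x (y *m II).
Hypothesis HIpos : forall x : 'rV[R]_n, x != 0 -> 0 < ip B (x *m II) x.

Definition adR (w : 'rV[R]_n) : 'M[R]_n := \matrix_(i, l) \sum_j w 0 j * c i j l.
Definition adL (m : 'rV[R]_n) : 'M[R]_n := \matrix_(j, l) \sum_i m 0 i * c i j l.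

Lemma lie_adR x w : lie_br c x w = x *m adR w.
Proof.
apply/rowP => l; rewrite !mxE; apply: eq_bigr => i _; rewrite mxE big_distrr.
by apply: eq_bigr => j _ /=; rewrite mulrA.
Qed.

Lemma lie_adL m y : lie_br c m y = y *m adL m.
Proof.
apply/rowP => l; rewrite !mxE exchange_big; apply: eq_bigr => j _; rewrite mxE big_distrr.
by apply: eq_bigr => i _ /=; rewrite mulrCA mulrA.
Qed.

Lemma lieDl x y w : lie_br c (x + y) w = lie_br c x w + lie_br c y w.
Proof. by rewrite !lie_adR mulmxDl. Qed.
Lemma lieZl a x w : lie_br c (a *: x) w = a *: lie_br c x w.
Proof. by rewrite !lie_adR scalemxAl. Qed.
Lemma lie_suml I (r : seq I) (P : pred I) (F : I -> 'rV[R]_n) w :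
  lie_br c (\sum_(i <- r | P i) F i) w = \sum_(i <- r | P i) lie_br c (F i) w.
Proof. rewrite lie_adR mulmx_suml; apply: eq_bigr => i _; by rewrite lie_adR. Qed.
Lemma lieDr m x y : lie_br c m (x + y) = lie_br c m x + lie_br c m y.
Proof. by rewrite !lie_adL mulmxDl. Qed.
Lemma lieZr a m x : lie_br c m (a *: x) = a *: lie_br c m x.
Proof. by rewrite !lie_adL scalemxAl. Qed.
Lemma lie_sumr I (r : seq I) (P : pred I) (F : I -> 'rV[R]_n) m :
  lie_br c m (\sum_(i <- r | P i) F i) = \sum_(i <- r | P i) lie_br c m (F i).
Proof. rewrite lie_adL mulmx_suml; apply: eq_bigr => i _; by rewrite lie_adL. Qed.
Lemma lie0l w : lie_br c 0 w = 0.
Proof. by rewrite lie_adR mul0mx. Qed.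
Lemma lie0r m : lie_br c m 0 = 0.
Proof. by rewrite lie_adL mul0mx. Qed.

Lemma ipDl x y z : ip B (x + y) z = ip B x z + ip B y z.
Proof. by rewrite /ip !mulmxDl mxE. Qed.
Lemma ipDr x y z : ip B z (x + y) = ip B z x + ip B z y.
Proof. by rewrite /ip linearD /= mulmxDr mxE. Qed.
Lemma ipZl a x z : ip B (a *: x) z = a * ip B x z.
Proof. by rewrite /ip -!scalemxAl mxE. Qed.
Lemma ipZr a x z : ip B z (a *: x) = a * ip B z x.
Proof. by rewrite /ip linearZ /= -scalemxAr mxE. Qed.
Lemma ip0l z : ip B 0 z = 0.
Proof. by rewrite /ip !mul0mx mxE. Qed.
Lemma ip0r z : ip B z 0 = 0.
Proof. by rewrite /ip trmx0 mulmx0 mxE. Qed.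
Lemma ipNl x z : ip B (- x) z = - ip B x z.
Proof. by rewrite -scaleN1r ipZl mulN1r. Qed.
Lemma ipNr x z : ip B z (- x) = - ip B z x.
Proof. by rewrite -scaleN1r ipZr mulN1r. Qed.
Lemma ip_suml I (r : seq I) (P : pred I) (F : I -> 'rV[R]_n) z :
  ip B (\sum_(i <- r | P i) F i) z = \sum_(i <- r | P i) ip B (F i) z.
Proof.
elim/big_rec2: _ => [|i y1 y2 _ <-]; [exact: ip0l| exact: ipDl].
Qed.
Lemma ip_sumr I (r : seq I) (P : pred I) (F : I -> 'rV[R]_n) z :
  ip B z (\sum_(i <- r | P i) F i) = \sum_(i <- r | P i) ip B z (F i).
Proof.
elim/big_rec2: _ => [|i y1 y2 _ <-]; [exact: ip0r| exact: ipDr].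
Qed.
Lemma ipC x y : ip B x y = ip B y x.
Proof.
rewrite /ip; transitivity ((x *m B *m y^T)^T 0 0); first by rewrite [RHS]mxE.
by rewrite !trmx_mul trmxK HBsym mulmxA.
Qed.


Lemma form_delta (M : 'M[R]_n) i j :
  ((delta_mx 0 i : 'rV[R]_n) *m M *m (delta_mx 0 j : 'rV[R]_n)^T) 0 0 = M i j.
Proof. by rewrite -rowE trmx_delta -colE !mxE. Qed.

Lemma form_eq (P Q : 'M[R]_n) :
  (forall x z : 'rV[R]_n, (x *m P *m z^T) 0 0 = (x *m Q *m z^T) 0 0) -> P = Q.
Proof. by move=> H; apply/matrixP => i j; rewrite -!form_delta H. Qed.

Lemma unit_of_inj (A : 'M[R]_n) :
  (forall x : 'rV[R]_n, x *m A = 0 -> x = 0) -> A \in unitmx.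
Proof.
move=> H; rewrite -row_free_unit -kermx_eq0; apply/eqP/matrixP => i j.
have /H : row i (kermx A) *m A = 0 by rewrite -row_mul mulmx_ker row0.
by move/rowP/(_ j); rewrite !mxE.
Qed.

Lemma B_unit : B \in unitmx.
Proof.
apply: unit_of_inj => x xB; apply/eqP; apply: contraT => x0.
by have := HBpos x0; rewrite /ip xB mul0mx mxE ltxx.
Qed.

Lemma II_unit : II \in unitmx.
Proof.
apply: unit_of_inj => x xB; apply/eqP; apply: contraT => x0.
by have := HIpos x0; rewrite xB ip0l ltxx.
Qed.

Local Notation J := (invmx II).

Lemma IIB : II *m B = B *m II^T.
Proof.
apply: form_eq => x z; rewrite mulmxA.
have := HIsym x z; rewrite /ip trmx_mul !mulmxA => ->; done.
Qed.

Lemma JB : J *m B = B *m J^T.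
Proof.
have h1 : II^T *m J^T = 1%:M by rewrite -trmx_mul mulVmx ?II_unit // trmx1.
rewrite -[LHS]mulmx1 -h1 !mulmxA -[J *m B *m II^T]mulmxA -IIB mulmxA mulVmx ?II_unit //.
by rewrite mul1mx.
Qed.

Lemma ipJ x y : ip B (x *m J) y = ip B x (y *m J).
Proof. by rewrite /ip trmx_mul -!mulmxA [J *m (B *m _)]mulmxA JB !mulmxA. Qed.

Lemma adR_skew w : adR w *m B = - (B *m (adR w)^T).
Proof.
apply: form_eq => x z.
have h := HBinv x w z; rewrite (Hanti z w) ipNr !lie_adR /ip in h.
rewrite mulmxA h trmx_mul mulmxN mulNmx !mulmxA [RHS]mxE.
done.
Qed.

Lemma tr_adR w : \tr (adR w) = 0.
Proof.
have h : \tr (adR w) = - \tr (adR w).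
  rewrite -{1}[adR w]mulmx1 -(mulmxV B_unit) mulmxA adR_skew mulNmx.
  rewrite linearN /= -mulmxA mxtrace_mulC -mulmxA mulVmx ?B_unit // mulmx1.
  by rewrite mxtrace_tr.
lra.
Qed.

Lemma tr_JadR w : \tr (J *m adR w) = 0.
Proof.
have h : \tr (J *m adR w) = - \tr (J *m adR w).
  rewrite -{1}[adR w]mulmx1 -(mulmxV B_unit) !mulmxA -[J *m adR w *m B]mulmxA adR_skew.
  rewrite mulmxN mulNmx linearN /= mulmxA JB mxtrace_mulC !mulmxA mulVmx ?B_unit //.
  by rewrite mul1mx -trmx_mul mxtrace_tr mxtrace_mulC.
lra.
Qed.

Lemma trace_lie1 w : \sum_b (lie_br c (delta_mx 0 b : 'rV[R]_n) w) 0 b = 0.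
Proof.
transitivity (\tr (adR w)); last exact: tr_adR.
apply: eq_bigr => b _.
by rewrite lie_adR -rowE mxE.
Qed.

Lemma trace_lie2 m : \sum_b (lie_br c m ((delta_mx 0 b : 'rV[R]_n) *m J)) 0 b = 0.
Proof.
have -> : \sum_b (lie_br c m ((delta_mx 0 b : 'rV[R]_n) *m J)) 0 b = - \tr (J *m adR m).
  rewrite /mxtrace -sumrN; apply: eq_bigr => b _.
  by rewrite Hanti lie_adR [in LHS]mxE -mulmxA -rowE mxE.
by rewrite tr_JadR oppr0.
Qed.

Lemma ip_asym m u v : ip B u (lie_br c m v) = - ip B v (lie_br c m u).
Proof. by rewrite -HBinv Hanti ipNl ipC. Qed.

End Alg.

Section PD.
Variables (R : realType) (k : nat).

Lemma unit_of_inj_k (A : 'M[R]_k) :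
  (forall x : 'rV[R]_k, x *m A = 0 -> x = 0) -> A \in unitmx.
Proof.
move=> H; rewrite -row_free_unit -kermx_eq0; apply/eqP/matrixP => i j.
have /H : row i (kermx A) *m A = 0 by rewrite -row_mul mulmx_ker row0.
by move/rowP/(_ j); rewrite !mxE.
Qed.

Lemma sq_pos (z : 'rV[R]_k) : z != 0 -> 0 < (z *m z^T) 0 0.
Proof.
move=> z0; rewrite mxE lt_neqAle sumr_ge0 ?andbT; last first.
  by move=> i _; rewrite mxE -expr2 sqr_ge0.
apply/negP => /eqP/esym H.
have nn : forall i : 'I_k, true -> 0 <= z 0 i * z^T i 0.
  by move=> i _; rewrite mxE -expr2 sqr_ge0.
have H2 := psumr_eq0P nn H.
move/negP: z0; apply; apply/eqP/rowP => i; rewrite mxE.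
move: (H2 i isT); rewrite mxE -expr2 => /eqP; rewrite sqrf_eq0 => /eqP.
by [].
Qed.

Lemma posdef_unit (N : 'M[R]_k) :
  (forall z : 'rV[R]_k, z != 0 -> 0 < (z *m N *m z^T) 0 0) -> N \in unitmx.
Proof.
move=> H; apply: unit_of_inj_k => z zN; apply/eqP; apply: contraT => z0.
by have := H z z0; rewrite zN mul0mx mxE ltxx.
Qed.

Lemma posdef_det (N : 'M[R]_k) :
  (forall z : 'rV[R]_k, z != 0 -> 0 < (z *m N *m z^T) 0 0) -> 0 < \det N.
Proof.
move=> H.
pose Np : 'M[{poly R}]_k := \matrix_(i, j)
   (((1%:M : 'M[R]_k) i j)%:P + 'X * (N i j - (1%:M : 'M[R]_k) i j)%:P).
pose pp := \det Np.
have ppE t : pp.[t] = \det ((1 - t) *: 1%:M + t *: N).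
  rewrite /pp -horner_evalE -det_map_mx; congr (\det _); apply/matrixP => i j.
  rewrite !mxE [LHS]horner_evalE !hornerE; ring.
have nz t : 0 <= t <= 1 -> pp.[t] != 0.
  move=> /andP[t0 t1]; rewrite ppE -unitfE -unitmxE; apply: posdef_unit => z z0.
  rewrite mulmxDr mulmxDl -!scalemxAr -!scalemxAl mulmx1.
  have := sq_pos z0; have := H z z0.
  move: (z *m z^T) (z *m N *m z^T) => P Q hb ha; rewrite !mxE.
  move: (P 0 0) (Q 0 0) ha hb => a b ha hb.
  case: (ltrP 0 t) => ht.
    by apply: ltr_pwDr; [apply: mulr_gt0|apply: mulr_ge0; lra].
  have -> : t = 0 by lra.
  by rewrite subr0 mul1r mul0r addr0.
have p0 : pp.[0] = 1 by rewrite ppE subr0 scale1r scale0r addr0 det1.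
have p1 : pp.[1] = \det N by rewrite ppE subrr scale0r scale1r add0r.
rewrite -p1; rewrite ltNge; apply/negP => hle.
have [c c01 pc] : exists2 c, c \in `[0, 1] & pp.[c] = 0.
  apply: IVT => //; first exact/continuous_subspaceT/continuous_horner.
  by rewrite p0 (min_idPr _) ?(max_idPl _) ?hle //; lra.
move: c01; rewrite in_itv /= => c01.
by have := nz c c01; rewrite pc eqxx.
Qed.

End PD.

Section MDL.
Variables (R : realType) (n p q : nat) (c : 'I_n -> 'I_n -> 'I_n -> R) (B : 'M[R]_n).
Variable x : 'M[R]_(p, q).

Lemma MD_mx a b (g dg : 'I_a -> 'I_b -> 'M[R]_(p, q) -> R) :
  (forall i j, is_diff x (g i j) (dg i j)) ->
  MD x (fun y => \matrix_(i, j) g i j y) (fun v => \matrix_(i, j) dg i j v).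
Proof. move=> H i j; apply: isd_ext (H i j) => [y|v]; by rewrite mxE. Qed.

Lemma MD_lie (f df g dg : 'M[R]_(p, q) -> 'rV[R]_n) : MD x f df -> MD x g dg ->
  MD x (fun y => lie_br c (f y) (g y))
       (fun v => lie_br c (df v) (g x) + lie_br c (f x) (dg v)).
Proof.
move=> Hf Hg i l.
have := isd_sum (index_enum 'I_n) (P := xpredT)
  (f := fun a y => \sum_b f y 0 a * g y 0 b * c a b l)
  (df := fun a v => \sum_b ((f x 0 a * g x 0 b) * 0 + c a b l * (f x 0 a * dg v 0 b + g x 0 b * df v 0 a)))
  (fun a _ => isd_sum (index_enum 'I_n) (P := xpredT)
      (f := fun b y => f y 0 a * g y 0 b * c a b l)
      (fun b _ => isd_mul (isd_mul (Hf 0 a) (Hg 0 b)) (isd_cst x (c a b l)))).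
apply: isd_ext => [y|v]; first by rewrite mxE.
rewrite !mxE.
rewrite -big_split /=; apply: eq_bigr => a _; rewrite -big_split /=.
by apply: eq_bigr => b _; ring.
Qed.

Lemma isd_ip (f df g dg : 'M[R]_(p, q) -> 'rV[R]_n) : MD x f df -> MD x g dg ->
  is_diff x (fun y => ip B (f y) (g y))
       (fun v => ip B (df v) (g x) + ip B (f x) (dg v)).
Proof.
move=> Hf Hg.
have := MD_mul (MD_mul Hf (MD_cst x B)) (MD_tr Hg) 0 0.
apply: isd_ext => [y|v] //.
by rewrite mulmx0 addr0 /ip [LHS]mxE.
Qed.

End MDL.

Section Main.
Variables (R : realType) (n k : nat) (c : 'I_n -> 'I_n -> 'I_n -> R) (B II : 'M[R]_n) (eps : R).
Hypothesis Hanti : forall x y : 'rV[R]_n, lie_br c y x = - lie_br c x y.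
Hypothesis HBsym : B^T = B.
Hypothesis HBpos : forall x : 'rV[R]_n, x != 0 -> 0 < ip B x x.
Hypothesis HBinv : forall x y z : 'rV[R]_n, ip B (lie_br c x y) z = ip B x (lie_br c y z).
Hypothesis HIsym : forall x y : 'rV[R]_n, ip B (x *m II) y = ip B x (y *m II).
Hypothesis HIpos : forall x : 'rV[R]_n, x != 0 -> 0 < ip B (x *m II) x.
Hypothesis Heps : eps != 0.

Local Notation V := 'M[R]_(k.+1, n).
Local Notation J := (invmx II).

Definition wY (Y : V) := mpart Y *m J.
Definition bY (Y : V) := lie_br c (mpart Y) (wY Y).
Definition AY (Y : V) : 'M[R]_k := \matrix_(i, j) ip B (epart Y i) (epart Y j *m J).
Definition ZY (Y : V) := invmx (AY Y).
Definition lamY (Y : V) (i : 'I_k) :=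
  - \sum_(j < k) ip B (epart Y j) (bY Y *m J) * ZY Y i j.
Definition mdotY (Y : V) := bY Y + \sum_(i < k) lamY Y i *: epart Y i.
Definition erowY (Y : V) (i : 'I_k) := eps *: lie_br c (epart Y i) (wY Y).
Definition MY (Y : V) : 'M[R]_k := \matrix_(i, j) ip B (epart Y i *m J) (epart Y j).

Lemma FE (Y : V) : eLR_field c B II eps Y =
  \matrix_(p, q) (match unlift ord0 p with
                  | Some i => erowY Y i 0 q
                  | None => mdotY Y 0 q
                  end).
Proof. by []. Qed.

Lemma DeltaE (Y : V) : eLR_Delta B II Y = \det (MY Y).
Proof. by []. Qed.

Lemma ipJ_ x y : ip B (x *m J) y = ip B x (y *m J).
Proof. exact: (ipJ HIsym HIpos). Qed.
Lemma ipC_ x y : ip B x y = ip B y x.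
Proof. exact: (ipC HBsym). Qed.
Lemma II_unit_ : II \in unitmx.
Proof. exact: (II_unit HIpos). Qed.

Lemma MA (Y : V) : MY Y = AY Y.
Proof. apply/matrixP => i j; rewrite !mxE; exact: ipJ_. Qed.

Lemma A_sym (Y : V) : (AY Y)^T = AY Y.
Proof.
apply/matrixP => i j; rewrite !mxE.
by rewrite -ipJ_ ipC_.
Qed.

Lemma Z_sym (Y : V) i j : ZY Y i j = ZY Y j i.
Proof. by rewrite /ZY -{1}A_sym -trmx_inv mxE. Qed.

Lemma dom_posdef (Y : V) : eLR_domain Y ->
  forall z : 'rV[R]_k, z != 0 -> 0 < (z *m AY Y *m z^T) 0 0.
Proof.
rewrite /eLR_domain => Hf z z0.
set E := \matrix_(i < k, j < n) Y (lift ord0 i) j.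
have eE i : epart Y i = row i E by apply/rowP => j; rewrite !mxE.
have AE : AY Y = E *m (B *m J^T) *m E^T.
  apply/matrixP => i j; rewrite [LHS]mxE !eE /ip rowE.
  by rewrite trmx_mul !mulmxA -!mulmxA -form_delta !mulmxA rowE trmx_mul !mulmxA.
set u := z *m E.
have u0 : u != 0.
  apply/eqP => u0; move/negP: z0; apply; apply/eqP.
  by apply: (row_free_inj Hf); rewrite mul0mx.
have -> : (z *m AY Y *m z^T) 0 0 = ip B u (u *m J).
  by rewrite AE /ip /u !trmx_mul !mulmxA.
set w := u *m J.
have uw : u = w *m II by rewrite /w -mulmxA mulVmx ?mulmx1 // II_unit_.
have w0 : w != 0 by apply: contraNneq u0 => w0; rewrite uw w0 mul0mx.
by rewrite {1}uw; apply: HIpos.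
Qed.

Variable X : V.
Hypothesis AXu : AY X \in unitmx.

Definition dw (v : V) := mpart v *m J.
Definition db (v : V) := lie_br c (mpart v) (wY X) + lie_br c (mpart X) (dw v).
Definition dA (v : V) : 'M[R]_k := \matrix_(i, j)
  (ip B (epart v i) (epart X j *m J) + ip B (epart X i) (epart v j *m J)).
Definition dZ (v : V) := - (ZY X *m dA v *m ZY X).
Definition dlam (v : V) (i : 'I_k) := - \sum_(j < k)
  ((ip B (epart v j) (bY X *m J) + ip B (epart X j) (db v *m J)) * ZY X i j
   + ip B (epart X j) (bY X *m J) * dZ v i j).
Definition dmdot (v : V) := db v + \sum_(i < k) (lamY X i *: epart v i + dlam v i *: epart X i).
Definition derow (v : V) (i : 'I_k) :=
  eps *: (lie_br c (epart v i) (wY X) + lie_br c (epart X i) (dw v)).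
Definition dF (v : V) : V := \matrix_(p, q) (match unlift ord0 p with
                  | Some i => derow v i 0 q
                  | None => dmdot v 0 q
                  end).
Definition dM (v : V) : 'M[R]_k := \matrix_(i, j)
  (ip B (epart v i *m J) (epart X j) + ip B (epart X i *m J) (epart v j)).

Lemma MD_m : MD X (@mpart R n k) (@mpart R n k).
Proof. exact: MD_row (MD_id X). Qed.

Lemma MD_e i : MD X (fun Y : V => epart Y i) (fun v => epart v i).
Proof. exact: MD_row (MD_id X). Qed.

Lemma MD_w : MD X wY dw.
Proof.
apply: MD_ext (MD_mul MD_m (MD_cst X J)) => // v.
by rewrite mulmx0 addr0.
Qed.

Lemma MD_b : MD X bY db.
Proof. exact: MD_lie MD_m MD_w. Qed.

Lemma MD_A : MD X AY dA.
Proof.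
apply: MD_mx => i j.
apply: isd_ext (isd_ip B (MD_e i) (MD_mul (MD_e j) (MD_cst X J))) => // v.
by rewrite mulmx0 addr0.
Qed.

Lemma MD_Z : MD X ZY dZ.
Proof. exact: MD_inv MD_A AXu. Qed.

Lemma isd_lam i : is_diff X (fun Y => lamY Y i) (fun v => dlam v i).
Proof.
apply: isd_opp.
apply: (isd_sum (index_enum 'I_k) (P := xpredT)
  (f := fun j Y => ip B (epart Y j) (bY Y *m J) * ZY Y i j)) => j _.
apply: isd_ext (isd_mul (isd_ip B (MD_e j) (MD_mul MD_b (MD_cst X J))) (MD_Z i j)) => // v.
by rewrite mulmx0 addr0 addrC mulrC [X in _ + X]mulrC.
Qed.

Lemma MD_mdot : MD X mdotY dmdot.
Proof.
have := MD_add MD_b (MD_sum (index_enum 'I_k) (P := xpredT)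
  (f := fun i Y => lamY Y i *: epart Y i) (fun i _ => MD_scale (isd_lam i) (MD_e i))).
by apply: MD_ext.
Qed.

Lemma MD_erow i : MD X (fun Y => erowY Y i) (fun v => derow v i).
Proof.
apply: MD_ext (MD_scale (isd_cst X eps) (MD_lie c (MD_e i) MD_w)) => // v.
by rewrite scale0r addr0.
Qed.

Lemma MD_F : MD X (eLR_field c B II eps) dF.
Proof.
have hh : forall (a : 'I_k.+1) (b : 'I_n), is_diff X
   (fun Y => match unlift ord0 a with Some i => erowY Y i 0 b | None => mdotY Y 0 b end)
   (fun v => match unlift ord0 a with Some i => derow v i 0 b | None => dmdot v 0 b end).
  move=> a b; case: (unlift ord0 a) => [i|].
    exact: MD_erow.
  exact: MD_mdot.
have H := MD_mx hh.
by apply: MD_ext H.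
Qed.

Lemma MD_M : MD X MY dM.
Proof.
apply: MD_mx => i j.
apply: isd_ext (isd_ip B (MD_mul (MD_e i) (MD_cst X J)) (MD_e j)) => // v.
by rewrite mulmx0 addr0.
Qed.


Lemma mpart_d0 b : mpart (delta_mx ord0 b : V) = delta_mx 0 b.
Proof. by apply/rowP => l; rewrite !mxE. Qed.
Lemma epart_d0 b i : epart (delta_mx ord0 b : V) i = 0.
Proof. by apply/rowP => l; rewrite !mxE lift_eqF. Qed.
Lemma mpart_dS i b : mpart (delta_mx (lift ord0 i) b : V) = 0.
Proof. by apply/rowP => l; rewrite !mxE eq_sym lift_eqF. Qed.
Lemma epart_dS i b : epart (delta_mx (lift ord0 i) b : V) i = delta_mx 0 b.
Proof. by apply/rowP => l; rewrite !mxE eqxx. Qed.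

Lemma tl1 w : \sum_b (lie_br c (delta_mx 0 b : 'rV[R]_n) w) 0 b = 0.
Proof. exact: (trace_lie1 Hanti HBpos HBinv). Qed.
Lemma tl2 m : \sum_b (lie_br c m ((delta_mx 0 b : 'rV[R]_n) *m J)) 0 b = 0.
Proof. exact: (trace_lie2 Hanti HBpos HBinv HIsym HIpos). Qed.

Lemma sum_dF_S i : \sum_b dF (delta_mx (lift ord0 i) b) (lift ord0 i) b = 0.
Proof.
transitivity (eps * \sum_b (lie_br c (delta_mx 0 b : 'rV[R]_n) (wY X)) 0 b).
  rewrite big_distrr; apply: eq_bigr => b _.
  rewrite mxE liftK /derow /dw mpart_dS epart_dS mul0mx lie0r addr0.
  by rewrite mxE.
by rewrite tl1 mulr0.
Qed.

Lemma sum_dF_0 : \sum_b dF (delta_mx ord0 b) ord0 b =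
  - \sum_(i < k) \sum_(j < k) ZY X i j * ip B (epart X j)
      ((lie_br c (epart X i) (wY X) + lie_br c (mpart X) (epart X i *m J)) *m J).
Proof.
have dA0 b : dA (delta_mx ord0 b) = 0.
  by apply/matrixP => i j; rewrite !mxE !epart_d0 mul0mx ip0l ip0r addr0.
have dZ0 b : dZ (delta_mx ord0 b) = 0.
  by rewrite /dZ dA0 mulmx0 mul0mx oppr0.
have dbE b : db (delta_mx ord0 b) = lie_br c (delta_mx 0 b) (wY X)
     + lie_br c (mpart X) (delta_mx 0 b *m J).
  by rewrite /db /dw mpart_d0.
have dlamE b i : dlam (delta_mx ord0 b) i =
   - \sum_(j < k) ZY X i j * ip B (epart X j) (db (delta_mx ord0 b) *m J).
  rewrite /dlam; congr (- _); apply: eq_bigr => j _.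
  by rewrite dZ0 epart_d0 ip0l add0r mxE mulr0 addr0 mulrC.
transitivity (\sum_b (db (delta_mx ord0 b)) 0 b
   + \sum_b \sum_(i < k) dlam (delta_mx ord0 b) i * epart X i 0 b).
  rewrite -big_split; apply: eq_bigr => b _ /=.
  rewrite mxE unlift_none /dmdot mxE; congr (_ + _).
  rewrite summxE; apply: eq_bigr => i _.
  by rewrite epart_d0 scaler0 add0r mxE.
have -> : \sum_b (db (delta_mx ord0 b)) 0 b = 0.
  under eq_bigr do rewrite dbE mxE.
  by rewrite big_split /= tl1 tl2 addr0.
rewrite add0r exchange_big /= -sumrN; apply: eq_bigr => i _.
under eq_bigr do rewrite dlamE mulNr big_distrl /=.
rewrite sumrN exchange_big /=; congr (- _); apply: eq_bigr => j _.
under eq_bigr do rewrite -mulrA.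
rewrite -big_distrr /=; congr (_ * _).
have -> : (lie_br c (epart X i) (wY X) + lie_br c (mpart X) (epart X i *m J))
   = \sum_b epart X i 0 b *: db (delta_mx ord0 b).
  rewrite {1 2}(row_sum_delta (epart X i)) lie_suml mulmx_suml lie_sumr -big_split /=.
  apply: eq_bigr => b _; rewrite dbE scalerDr lieZl -scalemxAl lieZr //.
rewrite mulmx_suml ip_sumr; apply: eq_bigr => b _.
by rewrite -scalemxAl ipZr mulrC.
Qed.


Lemma epart_F i : epart (eLR_field c B II eps X) i = erowY X i.
Proof. by apply/rowP => l; rewrite /epart [LHS]mxE FE [LHS]mxE liftK. Qed.

Lemma cofE i j : cofactor (MY X) i j = \det (AY X) * ZY X j i.
Proof.
rewrite MA.
have : \adj (AY X) = \det (AY X) *: ZY X.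
  rewrite /ZY /invmx AXu scalerA mulfV ?scale1r //.
  by rewrite -unitfE -unitmxE.
by move/matrixP/(_ j i); rewrite !mxE.
Qed.

Lemma derive_isd (f df : V -> R) v : is_diff X f df -> 'D_v f X = df v.
Proof. by move=> H; rewrite deriveE // diff_val. Qed.

Lemma lin_isd (f df : V -> R) (w : V) : is_diff X f df ->
  df w = \sum_a \sum_b w a b * df (delta_mx a b).
Proof.
move=> H; rewrite -(@diff_val _ _ _ _ _ _ _ H) {1}(matrix_sum_delta w) linear_sum; apply: eq_bigr => a _.
rewrite linear_sum; apply: eq_bigr => b _; by rewrite linearZ.
Qed.

Lemma S2_zero : \sum_(i < k) \sum_(j < k) ZY X i j * ip B (epart X j)
      (lie_br c (mpart X) (epart X i *m J) *m J) = 0.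
Proof.
set t := fun i j => ip B (epart X j *m J) (lie_br c (mpart X) (epart X i *m J)).
have tE i j : ip B (epart X j) (lie_br c (mpart X) (epart X i *m J) *m J) = t i j.
  by rewrite /t ipJ_.
have tA i j : t i j = - t j i by rewrite /t (ip_asym Hanti HBsym HBinv).
set S := (LHS).
have : S = - S.
  rewrite {1}/S; under eq_bigr do under eq_bigr do rewrite tE.
  rewrite exchange_big /S -sumrN; apply: eq_bigr => i _.
  rewrite -sumrN; apply: eq_bigr => j _.
  by rewrite tE tA Z_sym mulrN.
move=> h; lra.
Qed.

Let r := 1 / (2 * eps).
Hypothesis DXpos : 0 < \det (MY X).

Lemma isd_mu : is_diff X (fun Y => eLR_Delta B II Y `^ r)
   (fun v => r * (\det (MY X)) `^ (r - 1) *
       (\sum_i \sum_j dM v i j * cofactor (MY X) i j)).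
Proof. exact: isd_powR r (isd_det MD_M) DXpos. Qed.

Lemma isd_G a b : is_diff X
   (fun Y => (eLR_Delta B II Y `^ r *: eLR_field c B II eps Y) a b)
   (fun v => eLR_Delta B II X `^ r * dF v a b + eLR_field c B II eps X a b *
       (r * (\det (MY X)) `^ (r - 1) * (\sum_i \sum_j dM v i j * cofactor (MY X) i j))).
Proof.
apply: isd_ext (isd_mul isd_mu (MD_F a b)) => // y.
by rewrite [RHS]mxE.
Qed.

Lemma final_step :
  differentiable (fun Y => eLR_Delta B II Y `^ r *: eLR_field c B II eps Y) X /\
  divergence (fun Y => eLR_Delta B II Y `^ r *: eLR_field c B II eps Y) X = 0.
Proof.
split.
  pose G := fun Y : V => eLR_Delta B II Y `^ r *: eLR_field c B II eps Y.
  rewrite -/G.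
  have -> : G = \sum_(a < k.+1) \sum_(b < n) (fun Y => G Y a b *: delta_mx a b).
    apply/funext => Y; rewrite fct_sumE {1}(matrix_sum_delta (G Y)).
    by apply: eq_bigr => a _; rewrite fct_sumE.
  apply: differentiable_sum => a; apply: differentiable_sum => b.
  apply: differentiableZl.
  have H := isd_G a b; exact: ex_diff.
rewrite /divergence.
under eq_bigr do under eq_bigr do rewrite (derive_isd _ (isd_G _ _)).
set Fx := eLR_field c B II eps X.
set dmu := fun v => r * (\det (MY X)) `^ (r - 1) *
       (\sum_i \sum_j dM v i j * cofactor (MY X) i j).
have L : dmu Fx = \sum_a \sum_b Fx a b * dmu (delta_mx a b) := lin_isd Fx isd_mu.
transitivity (eLR_Delta B II X `^ r * (\sum_a \sum_b dF (delta_mx a b) a b) + dmu Fx).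
  rewrite L big_distrr -big_split; apply: eq_bigr => a _ /=.
  by rewrite big_distrr -big_split.
rewrite big_ord_recl sum_dF_0.
have -> : \sum_(i < k) \sum_b dF (delta_mx (lift ord0 i) b) (lift ord0 i) b = 0.
  by apply: big1 => i _; exact: sum_dF_S.
rewrite addr0.
rewrite /dmu DeltaE MA.
set D := \det (AY X).
have Dpos : 0 < D by rewrite /D -MA.
have D0 : D != 0 by apply: lt0r_neq0.
have Dc : cofactor (AY X) = fun i j => D * ZY X j i.
  by apply/funext => i; apply/funext => j; rewrite -MA cofE.
clearbody D.
set L_ := fun i => lie_br c (epart X i) (wY X).
set s := fun i j => ip B (epart X j) (L_ i *m J).
have dME i j : dM Fx i j = eps * (s i j + s j i).
  rewrite mxE !epart_F /erowY -/(L_ i) -/(L_ j) -scalemxAl ipZl ipZr mulrDr.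
  by rewrite ipC_ ipJ_.
have -> : \sum_i \sum_j dM Fx i j * cofactor (AY X) i j
    = \sum_i \sum_j eps * (s i j + s j i) * (D * ZY X j i).
  apply: eq_bigr => i _; apply: eq_bigr => j _.
  by rewrite dME Dc.
have Q : \sum_i \sum_j eps * (s i j + s j i) * (D * ZY X j i)
       = 2 * eps * D * \sum_i \sum_j ZY X i j * s i j.
  transitivity (eps * D * (\sum_i \sum_j ZY X i j * s i j + \sum_i \sum_j ZY X j i * s j i)).
    rewrite -big_split /= big_distrr; apply: eq_bigr => i _ /=.
    rewrite -big_split /= big_distrr; apply: eq_bigr => j _ /=.
    by rewrite (Z_sym X j i); ring.
  rewrite [X in _ + X]exchange_big /=; ring.
rewrite Q.
have S1E : \sum_i \sum_j ZY X i j * ip B (epart X j)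
      ((lie_br c (epart X i) (wY X) + lie_br c (mpart X) (epart X i *m J)) *m J)
   = \sum_i \sum_j ZY X i j * s i j.
  have := S2_zero; set S2 := (LHS) => h.
  transitivity (\sum_i \sum_j ZY X i j * s i j + S2); last by rewrite h addr0.
  rewrite /S2 -big_split; apply: eq_bigr => i _ /=.
  rewrite -big_split; apply: eq_bigr => j _ /=.
  by rewrite mulmxDl ipDr mulrDr.
rewrite S1E.
have DD : D `^ (r - 1) = D `^ r / D.
  rewrite powRB ?powRr1 //; first by apply: ltW.
  by apply/implyP => _.
rewrite DD /r.
set P := D `^ (1 / (2 * eps)).
field.
by rewrite D0 Heps.
Qed.

End Main.


Unset Implicit Arguments. Set Strict Implicit.

Theorem theorem1 (R : realType) (n k : nat)
  (c : 'I_n -> 'I_n -> 'I_n -> R) (B II : 'M[R]_n) (eps : R)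
  (Hanti : forall x y : 'rV[R]_n, lie_br c y x = - lie_br c x y)
  (Hjac : forall x y z : 'rV[R]_n,
     lie_br c x (lie_br c y z) + lie_br c y (lie_br c z x)
     + lie_br c z (lie_br c x y) = 0)
  (HBsym : B^T = B)
  (HBpos : forall x : 'rV[R]_n, x != 0 -> 0 < ip B x x)
  (HBinv : forall x y z : 'rV[R]_n, ip B (lie_br c x y) z = ip B x (lie_br c y z))
  (HIsym : forall x y : 'rV[R]_n, ip B (x *m II) y = ip B x (y *m II))
  (HIpos : forall x : 'rV[R]_n, x != 0 -> 0 < ip B (x *m II) x)
  (Hk : (1 <= k)%N) (Heps : eps != 0) :
  invariant_density [set X : 'M[R]_(k.+1, n) | eLR_domain X]
    (fun X : 'M[R]_(k.+1, n) => eLR_Delta B II X `^ (1 / (2 * eps)))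
    (eLR_field c B II eps).
Proof.
move=> X HX.
have pd := dom_posdef HIpos HX.
have AXu := posdef_unit pd.
have Dp : 0 < \det (MY B II X) by rewrite (MA HIsym HIpos); exact: posdef_det pd.
exact: (final_step Hanti HBsym HBpos HBinv HIsym HIpos Heps AXu Dp).
Qed.
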